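(* Let $\lambda$ be a partition of $n$ and let $\mathcal{G}$ be the generating set of $\mathcal{I}_\lambda$ consisting of: $e_1(n),\dots,e_{\ell(\lambda)-1}(n)$; the sets $e_{b_k}(n-k)$ for $1\le k\le t$ (where the set $e_{b_1}(n-1)$ may equivalently be taken to be $\{x_1^{b_1},\dots,x_n^{b_1}\}$); and, if $s>t$, the set $e_{n-s}(n-s)$ of all square-free monomials of degree $n-s$. Let $k\ge2$ be a column index for which $b_k$ is defined (i.e. $2\le k\le t$, or $k=s>t$ with $b_s:=n-s$), and suppose the $(k-1)$-st column of the Young diagram of $\lambda$ has height $\lambda'_k>1$. Writing $S=\{x_1,\dots,x_n\}$ and $S_{i_1,\dots,i_k}=S\setminus\{x_{i_1},\dots,x_{i_k}\}$, the set obtained from $\mathcal{G}$ by removing the $\binom{n-1}{k-1}+1$ elements $$e_{b_k}(S_{1,i_2,\dots,i_k})\quad(1<i_2<\cdots<i_k\le n)\qquad\text{and}\qquad e_{b_k}(S_{2,3,\dots,k+1})$$ still generates $\mathcal{I}_\lambda$.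
   Context: $k$ is a field of characteristic $0$ and $R=k[x_1,\dots,x_n]$. For a set $S$ of variables, $e_r(S)$ is the $r$-th elementary symmetric polynomial in the variables of $S$ ($e_0=1$, $e_r(S)=0$ if $r>|S|$), and for $1\le m\le n$, $e_r(m)=\{e_r(S): S\subseteq\{x_1,\dots,x_n\},\ |S|=m\}$. A partition $\lambda$ of $n$ has parts $\lambda_1\ge\lambda_2\ge\cdots$ (zero beyond its length $\ell(\lambda)$) and conjugate $\lambda'_i=\#\{j:\lambda_j\ge i\}$. Its Young diagram has rows counted from the bottom (bottom row of length $\lambda_1$), left-justified; columns are numbered $0,\dots,\lambda_1-1$ from the left, column $c$ having height $\lambda'_{c+1}$. Set $t=\lambda_2-1$, $s=\lambda_1-1$, and $b_k=\lambda'_1+\cdots+\lambda'_k-k+1$ for $1\le k\le t$. For $1\le m\le n$ let $\delta_m(\lambda)=\lambda'_n+\cdots+\lambda'_{n-m+1}$ ($\lambda'_i=0$ for $i>\lambda_1$). The De Concini–Procesi ideal $\mathcal{I}_\lambda\subseteq R$ is the ideal generated by all elements of the sets $e_r(m)$ with $1\le m\le n$ and $m\ge r>m-\delta_m(\lambda)$. *)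

(* Defs.v *)
From HB Require Import structures.
From mathcomp Require Import all_boot all_order all_algebra.
From mathcomp Require Import mpoly.
Unset Printing Implicit Defensive.
Import GRing.Theory.
Local Open Scope ring_scope.

(* Variables x_1..x_n are 'X_0 .. 'X_(n-1) in {mpoly F[n]}. *)

Definition esym (F : fieldType) (n : nat) (S : {set 'I_n}) (r : nat) : {mpoly F[n]} :=
  \sum_(T : {set 'I_n} | (T \subset S) && (#|T| == r)%N) \prod_(i in T) 'X_i.

Definition in_ideal (F : fieldType) (n : nat) (G : {mpoly F[n]} -> Prop)
  (p : {mpoly F[n]}) : Prop :=
  exists gs : seq ({mpoly F[n]} * {mpoly F[n]}),
    (forall c, c \in gs -> G c.2) /\ p = \sum_(c <- gs) c.1 * c.2.

Definition is_partition (la : seq nat) (n : nat) : bool :=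
  [&& sorted geq la, all (fun x => 0 < x)%N la & sumn la == n].

Definition conjp (la : seq nat) (i : nat) : nat := count (fun j => i <= j)%N la.

Definition delta (la : seq nat) (n m : nat) : nat :=
  (\sum_((n - m).+1 <= i < n.+1) conjp la i)%N.

Definition t_of (la : seq nat) : nat := (nth 0 la 1 - 1)%N.
Definition s_of (la : seq nat) : nat := (nth 0 la 0 - 1)%N.
Definition b_of (la : seq nat) (k : nat) : nat :=
  ((\sum_(1 <= i < k.+1) conjp la i).+1 - k)%N.

(* the defining generators of the De Concini--Procesi ideal I_lambda *)
Definition DPgen (F : fieldType) (n : nat) (la : seq nat) (p : {mpoly F[n]}) : Prop :=
  exists (m r : nat) (S : {set 'I_n}),
    [/\ (1 <= m <= n)%N, #|S| = m, (r <= m)%N, (m < r + delta la n m)%N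
      & p = esym F n S r].

(* The generating family G, with a selector [keep j S] deciding whether the
   member e_{b_j}(S) of the j-th family (j = s for the square-free monomials
   family e_{n-s}(n-s)) is kept. *)
Definition Gfam (F : fieldType) (n : nat) (la : seq nat)
  (keep : nat -> {set 'I_n} -> bool) (p : {mpoly F[n]}) : Prop :=
  (exists r, (1 <= r < size la)%N /\ p = esym F n [set: 'I_n] r)
  \/ (exists j (S : {set 'I_n}),
        [/\ (1 <= j <= t_of la)%N, #|S| = (n - j)%N, keep j S
          & p = esym F n S (b_of la j)])
  \/ ((t_of la < s_of la)%N /\
      exists S : {set 'I_n},
        [/\ #|S| = (n - s_of la)%N, keep (s_of la) S
          & p = esym F n S (n - s_of la)]).

(* S = S_{i_1,...,i_k} is one of the removed index sets: its complement T has
   k elements and either contains x_1 (index 0), or is {x_2,...,x_{k+1}}. *)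
Definition removed (n k : nat) (S : {set 'I_n}) : bool :=
  (#|~: S| == k) &&
  ([exists i in ~: S, val i == 0%N]
   || (~: S == [set i : 'I_n | (1 <= val i <= k)%N])).

Definition Gred (F : fieldType) (n : nat) (la : seq nat) (k : nat) :=
  Gfam F n la (fun j S => ~~ ((j == k) && removed n k S)).

(* Main.v *)
Require Import Defs.
From HB Require Import structures.
From mathcomp Require Import all_boot all_order all_algebra.
From mathcomp Require Import mpoly.
Set Implicit Arguments. Unset Strict Implicit. Unset Printing Implicit Defensive.
Import GRing.Theory.
Local Open Scope ring_scope.
Section Ideal.
Variables (F : fieldType) (n : nat).
Local Notation inI := (in_ideal F n).
Implicit Types (G H : {mpoly F[n]} -> Prop) (p q : {mpoly F[n]}).

Lemma ideal0 G : inI G 0.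
Proof. by exists [::]; split => //; rewrite big_nil. Qed.

Lemma ideal_gen G p : G p -> inI G p.
Proof.
move=> Gp; exists [:: (1, p)]; split; first by move=> c; rewrite inE => /eqP ->.
by rewrite big_seq1 mul1r.
Qed.

Lemma idealD G p q : inI G p -> inI G q -> inI G (p + q).
Proof.
move=> [s1 [H1 ->]] [s2 [H2 ->]]; exists (s1 ++ s2); split; last by rewrite big_cat.
by move=> c; rewrite mem_cat => /orP[/H1|/H2].
Qed.

Lemma idealM G a p : inI G p -> inI G (a * p).
Proof.
move=> [s [H ->]]; exists [seq (a * c.1, c.2) | c <- s]; split.
  by move=> c /mapP[d /H Hd ->].
by rewrite big_map mulr_sumr; apply: eq_bigr => c _; rewrite mulrA.
Qed.

Lemma idealN G p : inI G p -> inI G (- p).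
Proof. by move=> H; rewrite -mulN1r; apply: idealM. Qed.

Lemma idealB G p q : inI G p -> inI G q -> inI G (p - q).
Proof. by move=> H1 H2; apply: idealD => //; apply: idealN. Qed.

Lemma idealMn G p m : inI G p -> inI G (p *+ m).
Proof. by move=> H; rewrite -mulr_natl; apply: idealM. Qed.

Lemma ideal_sum G (I : finType) (P : pred I) (f : I -> {mpoly F[n]}) :
  (forall i, P i -> inI G (f i)) -> inI G (\sum_(i | P i) f i).
Proof.
move=> H; apply: (big_ind (in_ideal F n G)) => //; [exact: ideal0 | exact: idealD].
Qed.

Lemma ideal_trans G H p : (forall g, G g -> inI H g) -> inI G p -> inI H p.
Proof.
move=> GH [s [Hs ->]]; elim: s Hs => [|c s IH] Hs; first by rewrite big_nil; apply: ideal0.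
rewrite big_cons; apply: idealD; last by apply: IH => d Hd; apply: Hs; rewrite inE Hd orbT.
by apply: idealM; apply: GH; apply: Hs; rewrite inE eqxx.
Qed.

Lemma ideal_divn G p m : has_char0 F -> (0 < m)%N -> inI G (p *+ m) -> inI G p.
Proof.
move=> ch m0 H.
have -> : p = ((m%:R : F)^-1)%:MP * (p *+ m).
  rewrite mul_mpolyC -scaler_nat scalerA mulVf ?scale1r //.
  by move/charf0P: ch => ->; rewrite -lt0n.
exact: idealM.
Qed.

End Ideal.
Section Esym.
Variables (F : fieldType) (n : nat).
Local Notation es := (Defs.esym F n).

Lemma esym_big (S : {set 'I_n}) r : (#|S| < r)%N -> es S r = 0.
Proof.
move=> lt; apply: big1 => T /andP[sub /eqP cT].
by move: (subset_leq_card sub); rewrite cT leqNgt lt.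
Qed.

Lemma aux_sub (A B : {set 'I_n}) x r : x \in B -> x \notin A ->
  (x |: A \subset B) && (#|x |: A| == r.+1) = (A \subset B :\ x) && (#|A| == r).
Proof.
move=> xB xA; rewrite subsetD1 xA andbT cardsU1 xA add1n eqSS; congr (_ && _).
apply/idP/idP; last by move=> sub; rewrite subUset sub1set xB.
by rewrite subUset => /andP[].
Qed.

Lemma esymA (S : {set 'I_n}) x r : x \in S ->
  es S r.+1 = es (S :\ x) r.+1 + 'X_x * es (S :\ x) r.
Proof.
move=> xS; rewrite /Defs.esym. rewrite (bigID (fun T : {set 'I_n} => x \in T)) /= addrC; congr (_ + _).
  by apply: eq_bigl => T; rewrite subsetD1 andbAC.
rewrite mulr_sumr.
rewrite (reindex_onto (fun T => x |: T) (fun T => T :\ x)); last first.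
  by move=> T /andP[_ xT]; rewrite setD1K.
apply: eq_big => T.
  case xT: (x \in T).
    have -> : ((x |: T) :\ x == T) = false.
      by apply/negbTE/eqP => E; move: xT; rewrite -E !inE eqxx.
    by rewrite andbF subsetD1 xT andbF.
  rewrite setU1K ?xT // eqxx andbT setU11 andbT; apply: aux_sub => //; by rewrite xT.
move=> /andP[_ /eqP E]; by rewrite big_setU1 // -E !inE eqxx.
Qed.

Lemma esymC (S : {set 'I_n}) r :
  \sum_(x in S) es (S :\ x) r = es S r *+ (#|S| - r).
Proof.
rewrite /Defs.esym.
transitivity (\sum_(x in S) \sum_(T : {set 'I_n} | (T \subset S) && (#|T| == r))
   (if x \notin T then \prod_(i in T) 'X_i else 0 : {mpoly F[n]})).
  apply: eq_bigr => x xS; rewrite [RHS]big_mkcond /= [LHS]big_mkcond /=.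
  apply: eq_bigr => T; rewrite subsetD1.
  by case: (T \subset S); case: (x \in T); case: (#|T| == r).
rewrite exchange_big /= -sumrMnl; apply: eq_bigr => T /andP[sub /eqP cT].
rewrite -big_mkcondr /= sumr_const; congr (_ *+ _).
rewrite -cT -(cardsDS sub); apply: eq_card => y.
by rewrite !inE andbC.
Qed.

End Esym.
From mathcomp Require Import zify.
Section Part.
Local Open Scope nat_scope.

Definition Mf (la : seq nat) j := \sum_(p <- la) minn p j.

Lemma Mf_cons a l j : Mf (a :: l) j = minn a j + Mf l j.
Proof. by rewrite /Mf big_cons. Qed.

Lemma Mf_S la j : Mf la j.+1 = Mf la j + conjp la j.+1.
Proof.
elim: la => [|a l IH]; first by rewrite /Mf !big_nil.
rewrite !Mf_cons IH /conjp /=; case: (ltnP j a) => h /=; lia.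
Qed.

Lemma sumconj la j : \sum_(1 <= i < j.+1) conjp la i = Mf la j.
Proof.
elim: j => [|j IH]; first by rewrite big_geq // /Mf big1_seq // => p _; rewrite minn0.
by rewrite big_nat_recr //= IH Mf_S.
Qed.

Lemma Mf0 la : Mf la 0 = 0.
Proof. by rewrite -sumconj big_geq. Qed.

Lemma Mf_le la j : Mf la j <= sumn la.
Proof. elim: la => [|a l IH]; first by rewrite /Mf big_nil.
rewrite Mf_cons /=; lia. Qed.

Lemma Mf_all la j : all (fun p => p <= j) la -> Mf la j = sumn la.
Proof. elim: la => [|a l IH]; first by rewrite /Mf big_nil.
move=> /= /andP[h1 h2]; rewrite Mf_cons IH //; lia. Qed.

Lemma Mf_mono la j : Mf la j <= Mf la j.+1.
Proof. by rewrite Mf_S leq_addr. Qed.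

Lemma Mf_one la : all (fun x => 0 < x) la -> Mf la 1 = size la.
Proof. elim: la => [|a l IH]; first by rewrite /Mf big_nil.
move=> /= /andP[h1 h2]; rewrite Mf_cons IH //; lia. Qed.

Lemma count_small l i : all (fun p => p < i) l -> count (fun j => i <= j) l = 0.
Proof. elim: l => [|a l IH] //= /andP[h1 h2]; rewrite IH //; lia. Qed.

Lemma all_le_trans l a b : a <= b -> all (fun p => p <= a) l -> all (fun p => p <= b) l.
Proof. move=> ab /allP H; apply/allP => x /H; lia. Qed.

Lemma part_struct la n : is_partition la n -> (2 <= nth 0 la 1) ->
  exists a1 a2 rest, [/\ la = a1 :: a2 :: rest, a2 <= a1,
     all (fun p => p <= a2) rest, all (fun x => 0 < x) rest &
     n = a1 + a2 + sumn rest].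
Proof.
case: la => [|a1 [|a2 rest]] //= /and3P[so po /eqP sn] h2.
exists a1, a2, rest; move: so po; rewrite /= => /andP[h12 so] /and3P[_ _ po].
split => //; last by move: sn => /= sn; lia.
by move: so; rewrite path_sortedE; [case/andP | move=> x y z /=; lia].
Qed.

End Part.
From mathcomp Require Import zify ring.

Lemma cardA0 n k : (k < n)%N -> #|[set i : 'I_n | (1 <= val i <= k)%N]| = k.
Proof.
elim: k => [|k IH] lt.
  by apply/eqP; rewrite cards_eq0; apply/eqP/setP => i; rewrite !inE; case: (val i).
have lt' : (k < n)%N by lia.
have -> : [set i : 'I_n | (1 <= val i <= k.+1)%N] =
  (Ordinal lt) |: [set i : 'I_n | (1 <= val i <= k)%N].
  apply/setP => -[i Hi]; rewrite !inE -(inj_eq val_inj) /=.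
  case: (eqVneq i k.+1) => [->|/eqP ne] /=; first by rewrite ltnSn.
  apply/idP/idP => /andP[h1 h2]; apply/andP; split; lia.
rewrite cardsU1 IH // inE /=; lia.
Qed.

Lemma ar1 k : (0 < k)%N -> (1 + (k - 1))%N = k. Proof. lia. Qed.
Lemma ar2 k x : k = (1 + x)%N -> x = (k - 1)%N. Proof. lia. Qed.
Lemma ar3 k : (1 < k)%N -> (1 + (k - 2))%N = (k - 1)%N. Proof. lia. Qed.
Lemma ar4 n k : (k <= n)%N -> (n - (n - k))%N = k. Proof. lia. Qed.

Section Recovery.
Variables (F : fieldType) (n : nat) (G : {mpoly F[n]} -> Prop) (k b : nat).
Hypothesis ch : has_char0 F.
Hypothesis k2 : (2 <= k)%N.
Hypothesis kn : (k < n)%N.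
Local Notation inI := (in_ideal F n G).
Local Notation es := (Defs.esym F n).
Hypothesis Hyp1 : forall U : {set 'I_n}, #|U| = (n - (k - 1))%N -> inI (es U b).
Hypothesis Hyp2 : forall S : {set 'I_n}, #|S| = (n - k)%N -> ~~ removed n k S -> inI (es S b).

Let FF (A : {set 'I_n}) := es (~: A) b.

Let n0 : (0 < n)%N. Proof. lia. Qed.
Let n1 : (1 < n)%N. Proof. lia. Qed.
Let n2 : (2 < n)%N. Proof. lia. Qed.
Let i0 : 'I_n := Ordinal n0.
Let i1 : 'I_n := Ordinal n1.
Let i2 : 'I_n := Ordinal n2.
Let A0 : {set 'I_n} := [set i : 'I_n | (1 <= val i <= k)%N].

Let cA0 : #|A0| = k. Proof. exact: cardA0. Qed.
Let i0A0 : i0 \notin A0. Proof. by rewrite inE. Qed.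
Let i1A0 : i1 \in A0. Proof. rewrite inE /=; lia. Qed.
Let i2A0 : i2 \in A0. Proof. rewrite inE /=; lia. Qed.
Let i01 : i0 != i1. Proof. by rewrite -(inj_eq val_inj). Qed.
Let i02 : i0 != i2. Proof. by rewrite -(inj_eq val_inj). Qed.
Let i12 : i1 != i2. Proof. by rewrite -(inj_eq val_inj). Qed.

Let cardC (A : {set 'I_n}) : #|~: A| = (n - #|A|)%N.
Proof. by rewrite cardsCs setCK card_ord. Qed.

Let Rel (B : {set 'I_n}) : #|B| = (k - 1)%N -> inI (\sum_(z in ~: B) FF (z |: B)).
Proof.
move=> cB; have := esymC F (~: B) b.
have -> : \sum_(x in ~: B) es (~: B :\ x) b = \sum_(z in ~: B) FF (z |: B).
  apply: eq_bigr => z _; rewrite /FF; congr (es _ b).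
  by apply/setP => y; rewrite !inE negb_or andbC.
move=> ->; apply: idealMn; apply: Hyp1; rewrite cardC cB //.
Qed.

Let keptF (A : {set 'I_n}) : #|A| = k -> i0 \notin A -> A != A0 -> inI (FF A).
Proof.
move=> cA i0A AA0; apply: Hyp2; first by rewrite cardC cA.
rewrite /removed setCK cA eqxx /= negb_or AA0 andbT.
apply/existsP => -[i /andP[iA /eqP i0']].
have : i = i0 by apply: val_inj.
by move=> ei; move: iA; rewrite ei (negbTE i0A).
Qed.

Let relD1 (B : {set 'I_n}) w : w \notin B -> inI (\sum_(z in ~: B) FF (z |: B)) ->
  (forall z, z \notin B -> z != w -> inI (FF (z |: B))) -> inI (FF (w |: B)).
Proof.
move=> wB H1 H2; rewrite (bigD1 w) /= in H1; last by rewrite inE.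
have -> : FF (w |: B) = (FF (w |: B) + \sum_(i in ~: B | i != w) FF (i |: B))
   - \sum_(i in ~: B | i != w) FF (i |: B) by rewrite addrK.
apply: idealB => //; apply: ideal_sum => z /andP[]; rewrite inE; exact: H2.
Qed.

Let relD2 (B : {set 'I_n}) w1 w2 : w1 \notin B -> w2 \notin B -> w1 != w2 ->
  inI (\sum_(z in ~: B) FF (z |: B)) ->
  (forall z, z \notin B -> z != w1 -> z != w2 -> inI (FF (z |: B))) ->
  inI (FF (w1 |: B) + FF (w2 |: B)).
Proof.
move=> w1B w2B w12 H1 H2; rewrite (bigD1 w1) /= in H1; last by rewrite inE.
rewrite (bigD1 w2) /= in H1; last by rewrite inE w2B eq_sym.
set R := \sum_(i | _) _ in H1.
have -> : FF (w1 |: B) + FF (w2 |: B) = (FF (w1 |: B) + (FF (w2 |: B) + R)) - R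
  by rewrite addrA addrK.
apply: idealB => //; apply: ideal_sum => z /andP[] /andP[]; rewrite inE => zB z1 z2.
exact: H2.
Qed.

Let s1 (D : {set 'I_n}) : #|D| = (k - 1)%N -> i0 \notin D -> ~~ (D \subset A0) ->
  inI (FF (i0 |: D)).
Proof.
move=> cD i0D DA0; apply: relD1 => //; first exact: Rel.
move=> z zD zi0; apply: keptF.
- by rewrite cardsU1 zD cD; apply: ar1; apply: ltnW.
- by rewrite in_setU1 negb_or eq_sym zi0.
- apply: contraNneq DA0 => <-; exact: subsetUr.
Qed.

Let s2 y : y \in A0 -> inI (FF (i0 |: (A0 :\ y)) + FF A0).
Proof.
move=> yA.
have -> : FF A0 = FF (y |: (A0 :\ y)) by rewrite setD1K.
apply: relD2.
- by rewrite in_setD1 (negbTE i0A0) andbF.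
- by rewrite in_setD1 eqxx.
- by apply: contraNneq i0A0 => ->.
- apply: Rel; have := cardsD1 y A0; rewrite yA cA0 /=; exact: ar2.
move=> z zB zi0 zy; have zA : z \notin A0 by move: zB; rewrite in_setD1 zy.
apply: keptF.
- have h := cardsD1 y A0; rewrite yA cA0 /= in h; by rewrite cardsU1 zB /= h.
- by rewrite in_setU1 in_setD1 (negbTE i0A0) andbF orbF eq_sym.
- by apply/eqP => E; move: zA; rewrite -E setU11.
Qed.

Let s3 : inI (FF A0).
Proof.
set C := A0 :\: [set i1; i2].
have cC : #|C| = (k - 2)%N.
  rewrite cardsDS ?cards2 ?i12 ?cA0 //; by rewrite subUset !sub1set i1A0 i2A0.
have i0C : i0 \notin C by rewrite in_setD (negbTE i0A0) andbF.
have H : inI (FF (i1 |: (i0 |: C)) + FF (i2 |: (i0 |: C))).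
  apply: relD2.
  - by rewrite in_setU1 in_setD in_set2 eqxx.
  - by rewrite in_setU1 in_setD in_set2 eqxx orbT.
  - exact: i12.
  - apply: Rel; rewrite cardsU1 i0C cC; exact: ar3.
  move=> z zB z1 z2.
  have zi0 : z != i0 by apply: contraNneq zB => ->; rewrite setU11.
  have zC : z \notin C by move: zB; rewrite in_setU1 negb_or => /andP[].
  have zA : z \notin A0 by move: zC; rewrite in_setD in_set2 (negbTE z1) (negbTE z2).
  rewrite setUCA; apply: s1.
  - rewrite cardsU1 zC cC; exact: ar3.
  - by rewrite in_setU1 negb_or eq_sym zi0.
  - by apply: contraNN zA => /subsetP; apply; rewrite setU11.
have E1 : i1 |: (i0 |: C) = i0 |: (A0 :\ i2).
  apply/setP => x; rewrite /C !in_setU1 in_setD in_set2 in_setD1.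
  case: (eqVneq x i1) => [->|n1']; first by rewrite /= i1A0.
  by rewrite /=.
have E2 : i2 |: (i0 |: C) = i0 |: (A0 :\ i1).
  apply/setP => x; rewrite /C !in_setU1 in_setD in_set2 in_setD1.
  case: (eqVneq x i2) => [->|n2']; first by rewrite /= i2A0.
  by rewrite /= orbF.
rewrite E1 E2 in H.
apply: (@ideal_divn _ _ _ _ 2 ch) => //.
have := idealB (idealD (s2 i2A0) (s2 i1A0)) H.
congr inI; rewrite mulr2n; set a := FF _; set c := FF _; set d := FF _.
ring.
Qed.

Lemma recovery : forall S : {set 'I_n}, #|S| = (n - k)%N -> inI (es S b).
Proof.
move=> S cS; have -> : S = ~: (~: S) by rewrite setCK.
have cA : #|~: S| = k by rewrite cardC cS; apply: ar4; apply: ltnW.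
move: (~: S) cA => A cA; rewrite -/(FF A).
case: (boolP (i0 \in A)) => i0A; last first.
  by case: (eqVneq A A0) => [->|ne]; [exact: s3 | exact: keptF].
have -> : A = i0 |: (A :\ i0) by rewrite setD1K.
apply: relD1.
- by rewrite in_setD1 eqxx.
- apply: Rel; move: (cardsD1 i0 A); rewrite i0A cA /=; exact: ar2.
move=> z zD zi0.
case: (eqVneq (z |: (A :\ i0)) A0) => [->|ne]; first exact: s3.
apply: keptF => //.
- rewrite cardsU1 zD; move: (cardsD1 i0 A); rewrite i0A cA /=; by move=> ->.
- by rewrite in_setU1 in_setD1 eqxx /= orbF eq_sym.
Qed.

End Recovery.
Lemma ar6 n s e : (s <= n)%N -> (e.+1 <= s)%N -> (n - (s - e.+1) - (n - s))%N = e.+1.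
Proof. lia. Qed.
Lemma ar7 n s e : (s <= n)%N -> (e.+1 <= s)%N -> (n - (s - e.+1)).-1 = (n - (s - e))%N.
Proof. lia. Qed.

Lemma ar8 n j : (j < n)%N -> (n - j.+1 < n)%N. Proof. lia. Qed.
Lemma ar9 n j : (j < n)%N -> (true + (n - j.+1))%N = (n - j)%N. Proof. rewrite /=; lia. Qed.

Lemma ar10 n c : n = (1 + c)%N -> c = (n - 1)%N. Proof. lia. Qed.

Section Generic.
Variables (F : fieldType) (n : nat) (G : {mpoly F[n]} -> Prop).
Local Notation inI := (in_ideal F n G).
Local Notation es := (Defs.esym F n).
Definition Qg j r := forall S : {set 'I_n}, #|S| = (n - j)%N -> inI (es S r).

Lemma exists_notin (T : {set 'I_n}) : (#|T| < n)%N -> exists x, x \notin T.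
Proof.
move=> lt; case: (pickP (fun x => x \notin T)) => [x Hx|H]; first by exists x.
have : T = setT by apply/setP => x; rewrite inE; move: (H x) => /negbFE.
by move=> E; move: lt; rewrite E cardsT card_ord ltnn.
Qed.

Lemma full_set (S : {set 'I_n}) : #|S| = n -> S = setT.
Proof. by move=> cS; apply/eqP; rewrite eqEcard subsetT cardsT card_ord cS leqnn. Qed.

Lemma step_up j a a' : (j < n)%N -> (forall r, (a <= r)%N -> Qg j r) -> Qg j.+1 a' ->
  (a <= a'.+1)%N -> forall r, (a' <= r)%N -> Qg j.+1 r.
Proof.
move=> jn Hj Ha' aa' r /subnK <-; elim: (r - a')%N => [|d IH]; first by rewrite add0n.
move=> T cT.
have [x xT] : exists x, x \notin T.
  by apply: exists_notin; rewrite cT ar8.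
have cS : #|x |: T| = (n - j)%N.
  by rewrite cardsU1 xT cT ar9.
have := @esymA F n (x |: T) x (d + a') (setU11 x T).
rewrite setU1K // addSn => E.
have -> : es T (d + a').+1 = es (x |: T) (d + a').+1 - 'X_x * es T (d + a').
  by rewrite E addrK.
apply: idealB; first by apply: Hj => //; apply: leq_trans aa' _; rewrite ltnS leq_addl.
by apply: idealM; apply: IH.
Qed.

Lemma down s b : (s <= n)%N -> has_char0 F -> Qg s b ->
  (b = n - s)%N -> forall i, (i <= s)%N -> Qg i b.
Proof.
move=> sn ch Hs eb; subst b.
suff H : forall e, (e <= s)%N -> Qg (s - e) (n - s).
  by move=> i hi; have := H (s - i)%N (leq_subr _ _); rewrite subKn.
elim => [|e IH] es1; first by rewrite subn0.
move=> S cS; apply: (@ideal_divn _ _ _ _ e.+1 ch) => //.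
have := @esymC F n S (n - s); rewrite cS ar6 // => <-.
apply: ideal_sum => x xS; apply: (IH (ltnW es1) (S :\ x)).
by move: (cardsD1 x S); rewrite xS cS add1n => /(congr1 predn) /= <-; rewrite ar7.
Qed.

Lemma level0 l : (0 < l)%N -> (l < n)%N -> has_char0 F ->
  (forall r, (1 <= r < l)%N -> inI (es setT r)) -> Qg 1 l ->
  forall r, (1 <= r)%N -> Qg 0 r.
Proof.
move=> l0 ln ch Hlow Hl.
have cD : forall x : 'I_n, #|[set: 'I_n] :\ x| = (n - 1)%N.
  by move=> x; apply: ar10; have := cardsD1 x [set: 'I_n]; rewrite cardsT card_ord inE.
suff H : forall d, inI (es setT (l + d)) /\ Qg 1 (l + d).
  move=> r r1 S cS; rewrite (full_set (etrans cS (subn0 n))).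
  case: (ltnP r l) => rl; first by apply: Hlow; rewrite r1.
  by have [] := H (r - l)%N; rewrite subnKC.
elim => [|d [IH1 IH2]].
  split; last by rewrite addn0.
  rewrite addn0; apply: (@ideal_divn _ _ _ _ (n - l) ch); first by rewrite subn_gt0.
  have := @esymC F n setT l; rewrite cardsT card_ord => <-.
  by apply: ideal_sum => x _; apply: Hl; rewrite cD.
rewrite addnS; set r := (l + d)%N; set E := es setT r.+1.
have key : forall x, es (setT :\ x) r.+1 = E - 'X_x * es (setT :\ x) r.
  by move=> x; rewrite /E (@esymA F n setT x r) ?inE // addrK.
have HE : inI E.
  case: (leqP r.+1 n) => rn; last by rewrite /E esym_big ?cardsT ?card_ord //; apply: ideal0.
  apply: (@ideal_divn _ _ _ _ r.+1 ch) => //.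
  have E1 := @esymC F n setT r.+1; rewrite cardsT card_ord in E1.
  rewrite (eq_bigr _ (fun x _ => key x)) sumrB sumr_const cardsT card_ord in E1.
  have -> : E *+ r.+1 = E *+ (n - (n - r.+1)) by rewrite subKn.
  rewrite mulrnBr ?leq_subr // -E1 opprB addrC subrK.
  by apply: ideal_sum => x _; apply: idealM; apply: IH2; rewrite cD.
split => // S cS.
have [x xS] : exists x, x \notin S by apply: exists_notin; rewrite cS subn1 prednK //; apply: leq_ltn_trans ln.
have ES : S = setT :\ x.
  have -> : [set: 'I_n] = x |: S.
    by apply/esym/full_set; rewrite cardsU1 xS cS add1n subn1 prednK //; apply: leq_ltn_trans ln.
  by rewrite setU1K.
rewrite ES key; apply: idealB => //; apply: idealM; apply: IH2; rewrite cD //.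
Qed.

End Generic.
Section Arith.
Local Open Scope nat_scope.
Variables (n k a1 a2 : nat) (rest : seq nat).
Hypothesis k2 : 2 <= k.
Hypothesis ka2 : k <= a2.
Hypothesis h21 : a2 <= a1.
Hypothesis hrest : all (fun p => p <= a2) rest.
Hypothesis hpos : all (fun x => 0 < x) rest.
Hypothesis hn : n = a1 + a2 + sumn rest.
Let la := [:: a1, a2 & rest].

Lemma Mla j : Mf la j = minn a1 j + minn a2 j + Mf rest j.
Proof. by rewrite /la !Mf_cons addnA. Qed.

Lemma Rfacts j : [/\ Mf rest j <= sumn rest, (a2 <= j -> Mf rest j = sumn rest),
   Mf rest j <= Mf rest j.+1 & size rest <= sumn rest].
Proof.
split; [exact: Mf_le | move=> h; apply: Mf_all; exact: all_le_trans hrest | exact: Mf_mono |].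
by rewrite -Mf_one // Mf_le.
Qed.

Lemma b_eq j : b_of la j = (Mf la j).+1 - j.
Proof. by rewrite /b_of sumconj. Qed.

Lemma delta_eq m : m <= n -> delta la n m = n - Mf la (n - m).
Proof.
move=> mn; have Mn : Mf la n = n.
  rewrite Mla; have [_ h _ _] := Rfacts n; rewrite h; lia.
have H := sumconj la n.
rewrite (@big_cat_nat _ _ _ (n - m).+1) // in H; last by rewrite ltnS leq_subr.
rewrite sumconj Mn in H; rewrite /delta; move: H.
set X := \sum_((n - m).+1 <= i < n.+1) _ => H.
have H2 : Mf la (n - m) + X = n := H; lia.
Qed.

Ltac arith j := rewrite ?b_eq ?Mla; have [? ? ? ?] := Rfacts j;
  have [? ? ? ?] := Rfacts j.+1; rewrite ?Mla; lia.

Lemma N1 : b_of la 0 = 1.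
Proof. by rewrite b_eq Mf0. Qed.

Lemma N2 : b_of la 1 = size la.
Proof. rewrite b_eq Mf_one //= hpos andbT; apply/andP; split; lia. Qed.

Lemma N3 : size la < n.
Proof. have [_ _ _ h] := Rfacts 0; rewrite /= hn; lia. Qed.

Lemma N4 j : b_of la j <= (b_of la j.+1).+1.
Proof. rewrite !b_eq !Mla; have [? ? ? ?] := Rfacts j; lia. Qed.

Lemma N5 j : a1 <= j -> j <= n -> n - j < b_of la j.
Proof. move=> h h'; rewrite b_eq Mla; have [? h2 ? ?] := Rfacts j; rewrite h2; lia. Qed.

Lemma N6 i : i.+1 <= a2 -> b_of la i <= b_of la i.+1.
Proof. move=> h; rewrite !b_eq !Mla; have [? ? ? ?] := Rfacts i; lia. Qed.

Lemma N7 j : a2 <= j <= a1 -> b_of la j = n - (a1 - 1).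
Proof. move=> /andP[h1 h2]; rewrite b_eq Mla; have [? h3 ? ?] := Rfacts j; rewrite h3 //; lia. Qed.

Lemma N8 j : j < a1 -> b_of la j <= n - j /\ n - j < b_of la j + (n - Mf la j).
Proof. move=> h; rewrite b_eq Mla; have [? ? ? ?] := Rfacts j; lia. Qed.

Lemma N9 j r : j <= n -> n - j < r + (n - Mf la j) -> b_of la j <= r.
Proof. move=> h; rewrite b_eq Mla; have [? ? ? ?] := Rfacts j; lia. Qed.

Lemma N10 : Mf la 0 = 0. Proof. exact: Mf0. Qed.

Lemma N11 j : j < a1 -> Mf la j < n.
Proof. move=> h; rewrite Mla; have [? ? ? ?] := Rfacts j; lia. Qed.

Variable (F : fieldType).
Hypothesis ch : has_char0 F.
Hypothesis hk : (k <= a2 - 1) \/ (k = a1 - 1 /\ a2 - 1 < a1 - 1).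
Local Notation G := (Gred F n la k).
Local Notation J := (in_ideal F n G).
Local Notation es := (Defs.esym F n).
Local Notation Q := (@Qg F n G).

Let kn : k < n. Proof. rewrite hn; lia. Qed.
Let a1n : a1 <= n. Proof. rewrite hn; lia. Qed.
Let tE : t_of la = a2 - 1. Proof. by []. Qed.
Let sE : s_of la = a1 - 1. Proof. by []. Qed.

Let gen1 r : 1 <= r < size la -> J (es setT r).
Proof. by move=> h; apply: ideal_gen; left; exists r. Qed.

Let gen2 j (S : {set 'I_n}) : 1 <= j <= a2 - 1 -> j != k -> #|S| = n - j ->
  J (es S (b_of la j)).
Proof.
move=> h jk cS; apply: ideal_gen; right; left; exists j, S; split => //.
by rewrite (negbTE jk).
Qed.

Let gen2k (S : {set 'I_n}) : k <= a2 - 1 -> #|S| = n - k -> ~~ removed n k S ->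
  J (es S (b_of la k)).
Proof.
move=> h cS rS; apply: ideal_gen; right; left; exists k, S; split => //.
  by rewrite tE; apply/andP; split => //; lia.
by rewrite eqxx.
Qed.

Let gen3 (S : {set 'I_n}) : a2 - 1 < a1 - 1 -> a1 - 1 != k -> #|S| = n - (a1 - 1) ->
  J (es S (n - (a1 - 1))).
Proof.
move=> h sk cS; apply: ideal_gen; right; right; split => //; exists S; split => //.
by rewrite sE (negbTE sk).
Qed.

Let gen3k (S : {set 'I_n}) : k = a1 - 1 -> a2 - 1 < a1 - 1 -> #|S| = n - (a1 - 1) ->
  ~~ removed n k S -> J (es S (n - (a1 - 1))).
Proof.
move=> ks h cS rS; apply: ideal_gen; right; right; split => //; exists S; split => //.
by rewrite sE -ks eqxx.
Qed.

Let P j := forall r, b_of la j <= r -> Q j r.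

Let QB j : 1 <= j -> j < n -> P j.-1 -> Q j (b_of la j).
Proof.
move=> j1 jn Pj.
case: (leqP a1 j) => ja1.
  move=> S cS; rewrite esym_big; first exact: ideal0.
  by rewrite cS; apply: N5 => //; apply: ltnW.
case: (eqVneq j k) => [ejk|jk].
  subst j.
  have Hyp1 : forall U : {set 'I_n}, #|U| = n - (k - 1) -> J (es U (b_of la k)).
    move=> U cU; apply: (Pj _ _ U); last by rewrite -subn1.
    have := @N6 k.-1; rewrite prednK; last by lia.
    by apply.
  case: hk => [hk1|[hk1 hk2]].
    by apply: (@recovery F n G k (b_of la k) ch k2 kn Hyp1) => S cS rS; apply: gen2k.
  have ea2 : a2 = k by lia.
  have eb : b_of la k = n - (a1 - 1) by apply: N7; lia.
  apply: (@recovery F n G k (b_of la k) ch k2 kn Hyp1) => S cS rS; rewrite eb.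
  apply: gen3k => //; by rewrite -hk1.
case: (ltnP j a2) => ja2.
  by move=> S cS; apply: gen2 => //; lia.
have eb : b_of la j = n - (a1 - 1) by apply: N7; lia.
have st : a2 - 1 < a1 - 1 by lia.
have sk : a1 - 1 != k.
  apply/eqP => E; case: hk => [h|[_ h]]; first lia.
  move/eqP: jk; lia.
rewrite eb; apply: (@down F n G (a1 - 1) (n - (a1 - 1))) => //.
- lia.
- by move=> S cS; apply: gen3.
- lia.
Qed.

Let Pall j : j < n -> P j.
Proof.
elim: j => [|j IH] jn.
  move=> r; rewrite N1 => r1.
  apply: (@level0 F n G (size la)) => //.
  - exact: N3.
  - move=> S cS; rewrite -N2; apply: gen2 => //; lia.
have Pj := IH (ltnW jn).
apply: (@step_up F n G j (b_of la j) (b_of la j.+1)) => //.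
- exact: ltnW.
- by apply: QB.
- exact: N4.
Qed.

Lemma main_iff (p : {mpoly F[n]}) : J p <-> in_ideal F n (DPgen F n la) p.
Proof.
split; apply: ideal_trans => g.
  move=> Gg; apply: ideal_gen.
  case: Gg => [[r [h ->]]|[[j [S [hj cS _ ->]]]|[st [S [cS _ ->]]]]].
  - exists n, r, setT; split.
    + lia.
    + by rewrite cardsT card_ord.
    + have := N3; lia.
    + rewrite delta_eq // subnn N10; lia.
    + by [].
  - have ja1 : j < a1 by move: hj; rewrite tE; lia.
    have [h1 h2] := N8 ja1.
    exists (n - j), (b_of la j), S; split => //.
    + lia.
    + by rewrite delta_eq ?leq_subr // subKn //; lia.
  - have h := N11 (_ : a1 - 1 < a1); exists (n - (a1 - 1)), (n - (a1 - 1)), S; split => //.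
    + lia.
    + rewrite delta_eq ?leq_subr // subKn; last lia.
      have := h (ltac:(lia)); lia.
move=> [m [r [S [hm cS hr hd ->]]]].
have jn : n - m < n by lia.
apply: (Pall jn); last by rewrite cS; lia.
apply: N9; first exact: leq_subr.
by rewrite subKn; [move: hd; rewrite delta_eq //; lia | lia].
Qed.

End Arith.

Lemma conj_a2 la n k : is_partition la n -> (1 < conjp la k)%N -> (0 < k)%N -> (k <= nth 0 la 1)%N.
Proof.
case: la => [|a1 [|a2 rest]] //=.
  by rewrite /conjp /=; case: (k <= a1)%N.
move=> /and3P[so _ _] hc k0; case: (leqP k a2) => // ka2.
have sr : all (fun p => p < k)%N rest.
  move: so => /= /andP[_]; rewrite path_sortedE; last by move=> x y z /=; lia.
  by case/andP => /allP H _; apply/allP => x /H /=; lia.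
move: hc; rewrite /conjp /= count_small //; case: (k <= a1)%N; rewrite ?(leqNgt k a2) ka2 //.
Qed.

Theorem mainTheorem6 (F : fieldType) (charF0 : [pchar F]%R =i pred0)
  (n : nat) (la : seq nat) (k : nat) :
  is_partition la n ->
  (2 <= k)%N ->
  ((k <= t_of la)%N \/ (k = s_of la /\ (t_of la < s_of la)%N)) ->
  (1 < conjp la k)%N ->
  forall p : {mpoly F[n]}, in_ideal F n (Gred F n la k) p <-> in_ideal F n (DPgen F n la) p.
Proof.
move=> hp k2 hk hc p.
have ka2 := conj_a2 hp hc (ltnW k2).
have [a1 [a2 [rest [ela h21 hrest hpos hn]]]] := part_struct hp (leq_trans k2 ka2).
subst la; apply: main_iff => //.
Qed.
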